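(* Let $\mathbb{X},\mathbb{Y}$ be finite-dimensional real inner product spaces, $S\subseteq\mathbb{Y}$ a closed set and $\Upsilon:\mathbb{X}\to\mathbb{Y}$ a twice differentiable mapping. Let $\overline{x}\in\Upsilon^{-1}(S)$ and $d\in\mathbb{X}$. Suppose that the multifunction $\mathcal{F}(z):=\Upsilon(z)-S$ is metrically subregular at $\overline{x}$ for the origin in direction $d$, and that $S$ is outer second-order regular (respectively, second-order regular) at $\Upsilon(\overline{x})$ in the direction $\Upsilon'(\overline{x})d\in\mathcal{T}_S(\Upsilon(\overline{x}))$. Then $\Upsilon^{-1}(S)$ is outer second-order regular (respectively, second-order regular) at $\overline{x}$ in the direction $d$.
   Context: For a closed set $C$ in a finite-dimensional space, $x\in C$ and a direction $d$: the (Bouligand) tangent cone is $\mathcal{T}_C(x)=\{d\mid \exists t_k\downarrow0,\ d^k\to d \text{ with } x+t_kd^k\in C\}$; the outer second-order tangent set is $\mathcal{T}^2_C(x;d)=\{w\mid \exists t_k\downarrow 0 \text{ with } \mathrm{dist}(x+t_kd+\tfrac12t_k^2w,C)=o(t_k^2)\}$; the inner second-order tangent set is $\mathcal{T}^{i,2}_C(x;d)=\{w\mid \mathrm{dist}(x+td+\tfrac12t^2w,C)=o(t^2)\text{ as } t\downarrow0\}$. $C$ is outer second-order regular at $x$ in the direction $d\in\mathcal{T}_C(x)$ if for every sequence $x+t_kd+\tfrac12t_k^2w^k\in C$ with $t_k\downarrow0$ and $t_kw^k\to0$ one has $\mathrm{dist}(w^k,\mathcal{T}^2_C(x;d))\to0$;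 $C$ is second-order regular at $x$ in the direction $d$ if in addition $\mathcal{T}^2_C(x;d)=\mathcal{T}^{i,2}_C(x;d)$. For a mapping $\Upsilon$ and closed $S$, $\mathcal{F}(z)=\Upsilon(z)-S$ is (metrically) subregular at $\overline{x}$ for the origin in direction $d$ if there are $\kappa,\rho,\delta>0$ such that $\mathrm{dist}(x,\mathcal{F}^{-1}(0))\le\kappa\,\mathrm{dist}(\Upsilon(x),S)$ for all $x\in\overline{x}+V_{\rho,\delta}$, where $V_{\rho,\delta}=\{w\mid \|w\|\le\rho,\ \|\,\|d\|w-\|w\|d\,\|\le\delta\|w\|\|d\|\}$; for $d=0$ this is ordinary metric subregularity. *)

(* Defs.v *)
From Stdlib Require Import Reals.
From mathcomp Require Import ssreflect ssrfun ssrbool eqtype ssrnat seq fintype bigop.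
Open Scope R_scope.

(* A finite-dimensional real inner product space is modelled (up to isometry) by R^n
   with the Euclidean inner product. *)
Definition vec (n : nat) := 'I_n -> R.
Definition vadd {n} (x y : vec n) : vec n := fun i => x i + y i.
Definition vsub {n} (x y : vec n) : vec n := fun i => x i - y i.
Definition vscale {n} (a : R) (x : vec n) : vec n := fun i => a * x i.
Definition vzero (n : nat) : vec n := fun _ => 0.
Definition inner {n} (x y : vec n) : R := \big[Rplus/0]_(i < n) (x i * y i).
Definition norm {n} (x : vec n) : R := sqrt (inner x x).

(* dist(y, C) <= r, i.e. inf_{c in C} ||y - c|| <= r  (false if C is empty: dist = +oo) *)
Definition dist_le {n} (y : vec n) (C : vec n -> Prop) (r : R) : Prop :=
  forall eps, 0 < eps -> exists c, C c /\ norm (vsub y c) < r + eps.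

Definition closed_vset {n} (C : vec n -> Prop) : Prop :=
  forall x, (forall eps, 0 < eps -> exists c, C c /\ norm (vsub x c) < eps) -> C x.

Definition null_pos_seq (t : nat -> R) : Prop :=
  (forall k, 0 < t k) /\
  (forall eps, 0 < eps -> exists K, forall k, (K <= k)%nat -> Rabs (t k) < eps).

Definition vec_cv {n} (u : nat -> vec n) (v : vec n) : Prop :=
  forall eps, 0 < eps -> exists K, forall k, (K <= k)%nat -> norm (vsub (u k) v) < eps.

Definition tangent_cone {n} (C : vec n -> Prop) (x d : vec n) : Prop :=
  exists (t : nat -> R) (u : nat -> vec n),
    null_pos_seq t /\ vec_cv u d /\ forall k, C (vadd x (vscale (t k) (u k))).

Definition so_point {n} (x : vec n) (t : R) (d w : vec n) : vec n :=
  vadd (vadd x (vscale t d)) (vscale (/ 2 * t ^ 2) w).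

Definition outer_so_tangent {n} (C : vec n -> Prop) (x d : vec n) (w : vec n) : Prop :=
  exists t : nat -> R, null_pos_seq t /\
    forall eps, 0 < eps -> exists K, forall k, (K <= k)%nat ->
      dist_le (so_point x (t k) d w) C (eps * (t k) ^ 2).

Definition inner_so_tangent {n} (C : vec n -> Prop) (x d : vec n) (w : vec n) : Prop :=
  forall eps, 0 < eps -> exists del, 0 < del /\
    forall t, 0 < t < del -> dist_le (so_point x t d w) C (eps * t ^ 2).

Definition outer_so_regular {n} (C : vec n -> Prop) (x d : vec n) : Prop :=
  tangent_cone C x d /\
  forall (t : nat -> R) (w : nat -> vec n),
    null_pos_seq t ->
    (forall k, C (so_point x (t k) d (w k))) ->
    vec_cv (fun k => vscale (t k) (w k)) (vzero n) ->
    forall eps, 0 < eps -> exists K, forall k, (K <= k)%nat ->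
      dist_le (w k) (outer_so_tangent C x d) eps.

Definition so_regular {n} (C : vec n -> Prop) (x d : vec n) : Prop :=
  outer_so_regular C x d /\
  forall w, outer_so_tangent C x d w <-> inner_so_tangent C x d w.

Definition linear_map {n m} (L : vec n -> vec m) : Prop :=
  forall a b x y i, L (vadd (vscale a x) (vscale b y)) i = a * L x i + b * L y i.

Definition is_frechet_deriv {n m} (F : vec n -> vec m) (x : vec n) (L : vec n -> vec m) : Prop :=
  linear_map L /\
  forall eps, 0 < eps -> exists del, 0 < del /\ forall h, norm h < del ->
    norm (vsub (vsub (F (vadd x h)) (F x)) (L h)) <= eps * norm h.

Definition bilinear_map {n m} (B : vec n -> vec n -> vec m) : Prop :=
  (forall h, linear_map (B h)) /\ (forall v, linear_map (fun h => B h v)).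

(* Fréchet derivative of x |-> D x (a linear-map-valued function) at x, w.r.t. the
   operator norm: B is the second derivative. *)
Definition is_frechet_deriv2 {n m} (D : vec n -> vec n -> vec m) (x : vec n)
    (B : vec n -> vec n -> vec m) : Prop :=
  bilinear_map B /\
  forall eps, 0 < eps -> exists del, 0 < del /\ forall h v, norm h < del ->
    norm (vsub (vsub (D (vadd x h) v) (D x v)) (B h v)) <= eps * norm h * norm v.

Definition twice_differentiable_with {n m} (F : vec n -> vec m) (D : vec n -> vec n -> vec m) : Prop :=
  forall x, is_frechet_deriv F x (D x) /\ exists B, is_frechet_deriv2 D x B.

Definition preimage {n m} (F : vec n -> vec m) (S : vec m -> Prop) : vec n -> Prop :=
  fun x => S (F x).

Definition dir_nbhd {n} (d : vec n) (rho del : R) (w : vec n) : Prop :=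
  norm w <= rho /\
  norm (vsub (vscale (norm d) w) (vscale (norm w) d)) <= del * norm w * norm d.

Definition metric_subregular_dir {n m} (Ups : vec n -> vec m) (S : vec m -> Prop)
    (xbar d : vec n) : Prop :=
  exists kappa rho del, 0 < kappa /\ 0 < rho /\ 0 < del /\
    forall w, dir_nbhd d rho del w ->
      forall r, 0 <= r -> dist_le (Ups (vadd xbar w)) S r ->
        dist_le (vadd xbar w) (preimage Ups S) (kappa * r).

(* Main.v *)
From HB Require Import structures.
Require Import Defs.
From Stdlib Require Import Reals Lra Psatz ClassicalEpsilon FunctionalExtensionality.
From mathcomp Require Import ssreflect ssrfun ssrbool eqtype ssrnat seq fintype bigop.
Open Scope R_scope.
Set Implicit Arguments.

Lemma Rplus_assoc_ssr : associative Rplus. Proof. move=> *; ring. Qed.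
HB.instance Definition _ := Monoid.isComLaw.Build R 0 Rplus Rplus_assoc_ssr Rplus_comm Rplus_0_l.

Notation Rsum n F := (\big[Rplus/0]_(i < n) F i).

Lemma bsum_le n (F G : 'I_n -> R) : (forall i, F i <= G i) -> Rsum n F <= Rsum n G.
Proof. move=> H; apply: (big_ind2 (fun a b => a <= b)) => //; [lra| move=> *; lra]. Qed.

Lemma bsum_ge0 n (F : 'I_n -> R) : (forall i, 0 <= F i) -> 0 <= Rsum n F.
Proof. move=> H; apply: (big_ind (fun a => 0 <= a)) => //; [lra| move=> *; lra]. Qed.

Lemma bsum_scale n a (F : 'I_n -> R) : Rsum n (fun i => a * F i) = a * Rsum n F.
Proof. apply: (big_ind2 (fun x y => x = a * y)) => //; [ring| move=> ? ? ? ? -> ->; ring]. Qed.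

Lemma bsum_add n (F G : 'I_n -> R) : Rsum n (fun i => F i + G i) = Rsum n F + Rsum n G.
Proof. by rewrite big_split. Qed.

Lemma bsum_abs n (F : 'I_n -> R) : Rabs (Rsum n F) <= Rsum n (fun i => Rabs (F i)).
Proof.
apply: (big_ind2 (fun x y => Rabs x <= y)) => //.
- rewrite Rabs_R0; lra.
- move=> ? ? ? ? ? ?; apply: Rle_trans (Rabs_triang _ _) _; lra.
- move=> *; lra.
Qed.

Lemma bsum_const_le n (F : 'I_n -> R) c : (forall i, F i <= c) -> Rsum n F <= INR n * c.
Proof.
elim: n F => [|n IH] F H; first by rewrite big_ord0 /=; lra.
rewrite big_ord_recr S_INR.
have H1 := IH (fun i => F (widen_ord (leqnSn n) i)) (fun i => H _).
have H2 := H ord_max. rewrite Rmult_plus_distr_r Rmult_1_l; exact: Rplus_le_compat H1 H2.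
Qed.

Lemma bsum_single n (F : 'I_n -> R) j : (forall i, i != j -> F i = 0) -> Rsum n F = F j.
Proof.
move=> H; rewrite (bigD1 j) //= big1; first lra.
by move=> i /= Hi; apply: H.
Qed.

Lemma bsum_comp_le n (F : 'I_n -> R) j : (forall i, 0 <= F i) -> F j <= Rsum n F.
Proof.
move=> H; rewrite (bigD1 j) //=.
rewrite -{1}(Rplus_0_r (F j)); apply: Rplus_le_compat_l.
apply: (big_ind (fun a => 0 <= a)) => //; [lra| move=> *; lra].
Qed.

Lemma vec_ext n (x y : vec n) : (forall i, x i = y i) -> x = y.
Proof. move=> H; apply: functional_extensionality; exact H. Qed.

Lemma inner_sym n (x y : vec n) : inner x y = inner y x.
Proof. rewrite /inner; apply: eq_bigr => i _; ring. Qed.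

Lemma inner_addl n (x y z : vec n) : inner (vadd x y) z = inner x z + inner y z.
Proof. rewrite /inner -bsum_add; apply: eq_bigr => i _; rewrite /vadd; ring. Qed.

Lemma inner_scalel n a (x z : vec n) : inner (vscale a x) z = a * inner x z.
Proof. rewrite /inner -bsum_scale; apply: eq_bigr => i _; rewrite /vscale; ring. Qed.

Lemma inner_xx_ge0 n (x : vec n) : 0 <= inner x x.
Proof. apply: bsum_ge0 => i; nra. Qed.

Lemma norm_ge0 n (x : vec n) : 0 <= norm x.
Proof. apply: sqrt_pos. Qed.

Lemma norm_sq n (x : vec n) : norm x * norm x = inner x x.
Proof. apply: sqrt_sqrt; apply: inner_xx_ge0. Qed.

Lemma norm_scale n a (x : vec n) : norm (vscale a x) = Rabs a * norm x.
Proof.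
rewrite /norm inner_scalel inner_sym inner_scalel -Rmult_assoc sqrt_mult.
- by rewrite sqrt_Rsqr_abs.
- nra.
- apply: inner_xx_ge0.
Qed.

Lemma inner_addr n (x y z : vec n) : inner z (vadd x y) = inner z x + inner z y.
Proof. by rewrite inner_sym inner_addl !(inner_sym z). Qed.

Lemma inner_scaler n a (x z : vec n) : inner z (vscale a x) = a * inner z x.
Proof. by rewrite inner_sym inner_scalel (inner_sym z). Qed.

Lemma cauchy_schwarz n (x y : vec n) : Rabs (inner x y) <= norm x * norm y.
Proof.
have Hq : forall t, 0 <= inner x x + 2 * t * inner x y + t * t * inner y y.
  move=> t; have := inner_xx_ge0 (vadd x (vscale t y)).
  rewrite inner_addl !inner_addr !inner_scalel !inner_scaler (inner_sym y x); nra.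
have Hx := inner_xx_ge0 x; have Hy := inner_xx_ge0 y.
have Hnx := norm_sq x; have Hny := norm_sq y.
have Gx := norm_ge0 x; have Gy := norm_ge0 y.
suff H : inner x y * inner x y <= inner x x * inner y y.
  apply: Rsqr_incr_0_var; last nra.
  rewrite /Rsqr -Rabs_mult Rabs_pos_eq; nra.
case: (Req_dec (inner y y) 0) => Hy0.
- have -> : inner x y = 0.
    case: (Req_dec (inner x y) 0) => // Hne.
    have := Hq (- (inner x x + 1) / (2 * inner x y)).
    rewrite Hy0; move: Hne; move: (inner x y) (inner x x) => a c Hne.
    have -> : c + 2 * (- (c + 1) / (2 * a)) * a + - (c + 1) / (2 * a) * (- (c + 1) / (2 * a)) * 0 = -1.
      field; exact Hne.
    lra.
  nra.
- have Hp : 0 < inner y y by lra.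
  have := Hq (- inner x y / inner y y).
  move: Hp; move: (inner x y) (inner y y) (inner x x) => a b c Hp Hq0.
  have E : c + 2 * (- a / b) * a + - a / b * (- a / b) * b = (c * b - a * a) / b.
    field; lra.
  rewrite E in Hq0.
  have : 0 <= (c * b - a * a) / b * b by nra.
  rewrite /Rdiv Rmult_assoc Rinv_l; lra.
Qed.

Lemma norm_triang n (x y : vec n) : norm (vadd x y) <= norm x + norm y.
Proof.
have := cauchy_schwarz x y; have := norm_sq (vadd x y).
rewrite inner_addl !inner_addr (inner_sym y x) -norm_sq -(norm_sq y).
have := norm_ge0 x; have := norm_ge0 y; have := norm_ge0 (vadd x y).
move=> *; have := Rle_abs (inner x y); nra.
Qed.

Lemma norm_zero n : norm (vzero n) = 0.
Proof.
rewrite /norm /inner big1 ?sqrt_0 // => i _; rewrite /vzero; ring.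
Qed.

Lemma vsub_scale n (x y : vec n) : vsub y x = vscale (-1) (vsub x y).
Proof. apply: vec_ext => i; rewrite /vsub /vscale; ring. Qed.

Lemma norm_vsub_sym n (x y : vec n) : norm (vsub x y) = norm (vsub y x).
Proof. by rewrite (vsub_scale x y) norm_scale Rabs_Ropp Rabs_R1 Rmult_1_l. Qed.

Lemma norm_opp n (x : vec n) : norm (vscale (-1) x) = norm x.
Proof. by rewrite norm_scale Rabs_Ropp Rabs_R1 Rmult_1_l. Qed.

Lemma norm_vsub_le n (x y : vec n) : norm (vsub x y) <= norm x + norm y.
Proof.
have -> : vsub x y = vadd x (vscale (-1) y).
  apply: vec_ext => i; rewrite /vsub /vadd /vscale; ring.
by apply: Rle_trans (norm_triang _ _) _; rewrite norm_opp; lra.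
Qed.

Lemma vsub_triang n (x y z : vec n) : norm (vsub x z) <= norm (vsub x y) + norm (vsub y z).
Proof.
have -> : vsub x z = vadd (vsub x y) (vsub y z).
  apply: vec_ext => i; rewrite /vsub /vadd; ring.
exact: norm_triang.
Qed.

Lemma norm_rev_triang n (x y : vec n) : Rabs (norm x - norm y) <= norm (vsub x y).
Proof.
have H1 := vsub_triang x y (vzero n); have H2 := vsub_triang y x (vzero n).
have E : forall z : vec n, vsub z (vzero n) = z.
  move=> z; apply: vec_ext => i; rewrite /vsub /vzero; ring.
rewrite !E in H1 H2; rewrite (norm_vsub_sym y x) in H2.
apply: Rabs_le; lra.
Qed.

Lemma comp_le_norm n (x : vec n) i : Rabs (x i) <= norm x.
Proof.
rewrite -sqrt_Rsqr_abs /norm; apply: sqrt_le_1_alt.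
rewrite /Rsqr /inner.
exact: (bsum_comp_le (fun j => x j * x j) i (fun j => ltac:(nra))).
Qed.

Lemma norm_le_sum_abs n (x : vec n) : norm x <= Rsum n (fun i => Rabs (x i)).
Proof.
have [H0 H] : 0 <= Rsum n (fun i => Rabs (x i)) /\ inner x x <= Rsum n (fun i => Rabs (x i)) * Rsum n (fun i => Rabs (x i)).
  rewrite /inner.
  apply: (big_ind2 (fun a b => 0 <= b /\ a <= b * b)) => //.
  - lra.
  - move=> a1 b1 a2 b2 [? ?] [? ?]; nra.
  - move=> i _; split; first exact: Rabs_pos.
    rewrite -Rabs_mult Rabs_pos_eq; nra.
rewrite /norm -(sqrt_square (Rsum n (fun i => Rabs (x i)))) //; exact: sqrt_le_1_alt.
Qed.

Lemma norm_le_comp n (x : vec n) c : (forall i, Rabs (x i) <= c) -> norm x <= INR n * c.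
Proof. move=> H; apply: Rle_trans (norm_le_sum_abs x) _; exact: bsum_const_le. Qed.

Definition ebas n (j : 'I_n) : vec n := fun i => if i == j then 1 else 0.

Lemma lin_zero n m (L : vec n -> vec m) i : linear_map L -> L (vzero n) i = 0.
Proof.
move=> HL; have -> : vzero n = vadd (vscale 0 (vzero n)) (vscale 0 (vzero n)).
  apply: vec_ext => j; rewrite /vadd /vscale /vzero; ring.
rewrite HL; ring.
Qed.

Lemma lin_seq n m (L : vec n -> vec m) (h : vec n) i (r : seq 'I_n) : linear_map L ->
  L (fun k => \big[Rplus/0]_(j <- r) (h j * ebas j k)) i = \big[Rplus/0]_(j <- r) (h j * L (ebas j) i).
Proof.
move=> HL; elim: r => [|j r IH].
- have -> : (fun k => \big[Rplus/0]_(j <- [::]) (h j * ebas j k)) = vzero n.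
    by apply: vec_ext => k; rewrite big_nil.
  by rewrite big_nil lin_zero.
- rewrite big_cons -IH.
  have -> : (fun k => \big[Rplus/0]_(j0 <- j :: r) (h j0 * ebas j0 k))
     = vadd (vscale (h j) (ebas j)) (vscale 1 (fun k => \big[Rplus/0]_(j0 <- r) (h j0 * ebas j0 k))).
    apply: vec_ext => k; rewrite big_cons /vadd /vscale; ring.
  rewrite HL; ring.
Qed.

Lemma vec_basis n (h : vec n) : h = (fun k => Rsum n (fun j => h j * ebas j k)).
Proof.
apply: vec_ext => k; rewrite (bsum_single _ k) /ebas ?eqxx ?Rmult_1_r //.
move=> j Hj; rewrite eq_sym (negbTE Hj); ring.
Qed.

Lemma lin_coord n m (L : vec n -> vec m) (h : vec n) i : linear_map L ->
  L h i = Rsum n (fun j => h j * L (ebas j) i).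
Proof. move=> HL; rewrite {1}(vec_basis h); exact: lin_seq. Qed.

Definition lin_const n m (L : vec n -> vec m) : R := INR m * Rsum n (fun j => norm (L (ebas j))).

Lemma lin_const_ge0 n m (L : vec n -> vec m) : 0 <= lin_const L.
Proof.
apply: Rmult_le_pos; first exact: pos_INR.
apply: bsum_ge0 => j; exact: norm_ge0.
Qed.

Lemma lin_bound n m (L : vec n -> vec m) h : linear_map L -> norm (L h) <= lin_const L * norm h.
Proof.
move=> HL; rewrite /lin_const Rmult_assoc; apply: norm_le_comp => i.
rewrite lin_coord //; eapply Rle_trans; first exact: bsum_abs.
rewrite Rmult_comm -bsum_scale; apply: bsum_le => j.
rewrite Rabs_mult; apply: Rmult_le_compat; try exact: Rabs_pos.
- exact: comp_le_norm.
- exact: comp_le_norm.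
Qed.

Definition bilin_const n m (B : vec n -> vec n -> vec m) : R :=
  INR m * Rsum n (fun j => lin_const (B (ebas j))).

Lemma bilin_const_ge0 n m (B : vec n -> vec n -> vec m) : 0 <= bilin_const B.
Proof.
apply: Rmult_le_pos; first exact: pos_INR.
apply: bsum_ge0 => j; exact: lin_const_ge0.
Qed.

Lemma bilin_bound n m (B : vec n -> vec n -> vec m) h v : bilinear_map B ->
  norm (B h v) <= bilin_const B * norm h * norm v.
Proof.
move=> [HB1 HB2]; rewrite /bilin_const !Rmult_assoc; apply: norm_le_comp => i.
rewrite (lin_coord _ _ (HB2 v)); eapply Rle_trans; first exact: bsum_abs.
rewrite Rmult_comm -bsum_scale; apply: bsum_le => j.
rewrite Rabs_mult.
have H1 := comp_le_norm h j.
have H2 : Rabs (B (ebas j) v i) <= lin_const (B (ebas j)) * norm v.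
  apply: Rle_trans (comp_le_norm _ i) _; exact: lin_bound.
have := lin_const_ge0 (B (ebas j)); have := norm_ge0 v; have := Rabs_pos (h j);
have := Rabs_pos (B (ebas j) v i); nra.
Qed.

Lemma lin_scale n m (L : vec n -> vec m) a x i : linear_map L -> L (vscale a x) i = a * L x i.
Proof.
move=> HL; have -> : vscale a x = vadd (vscale a x) (vscale 0 x).
  apply: vec_ext => j; rewrite /vadd /vscale; ring.
rewrite HL; ring.
Qed.

Lemma lin_add n m (L : vec n -> vec m) x y i : linear_map L -> L (vadd x y) i = L x i + L y i.
Proof.
move=> HL; have -> : vadd x y = vadd (vscale 1 x) (vscale 1 y).
  apply: vec_ext => j; rewrite /vadd /vscale; ring.
rewrite HL; ring.
Qed.

Lemma lin_sub n m (L : vec n -> vec m) x y i : linear_map L -> L (vsub x y) i = L x i - L y i.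
Proof.
move=> HL; have -> : vsub x y = vadd (vscale 1 x) (vscale (-1) y).
  apply: vec_ext => j; rewrite /vsub /vadd /vscale; ring.
rewrite HL; ring.
Qed.

Lemma deriv_line n m (F : vec n -> vec m) y0 h c L a b i :
  is_frechet_deriv F (vadd y0 (vscale c h)) L ->
  derivable_pt_lim (fun s => F (vadd y0 (vscale s h)) i - s * a - / 2 * s ^ 2 * b) c
     (L h i - a - c * b).
Proof.
move=> [HL HF] eps Heps.
have Hn := norm_ge0 h.
have He1 : 0 < eps / 2 / (norm h + 1) by apply: Rdiv_lt_0_compat; lra.
have [del [Hdel Hd]] := HF _ He1.
have Hd1 : 0 < Rmin (del / (norm h + 1)) (eps / (Rabs b + 1)).
  apply: Rmin_pos; apply: Rdiv_lt_0_compat; try lra; have := Rabs_pos b; lra.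
exists (mkposreal _ Hd1) => t Ht0 Ht /=.
have Ht1 : Rabs t < del / (norm h + 1) by apply: Rlt_le_trans Ht (Rmin_l _ _).
have Ht2 : Rabs t < eps / (Rabs b + 1) by apply: Rlt_le_trans Ht (Rmin_r _ _).
have Hnt : norm (vscale t h) < del.
  rewrite norm_scale.
  have := Rabs_pos t.
  have H1 : Rabs t * (norm h + 1) < del.
    have := Rmult_lt_compat_r (norm h + 1) _ _ ltac:(lra) Ht1.
    rewrite /Rdiv Rmult_assoc Rinv_l; lra.
  nra.
have := Hd _ Hnt.
have -> : vadd (vadd y0 (vscale c h)) (vscale t h) = vadd y0 (vscale (c + t) h).
  apply: vec_ext => j; rewrite /vadd /vscale; ring.
set E := vsub _ _ => HE.
have HEi : Rabs (E i) <= eps / 2 / (norm h + 1) * norm (vscale t h).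
  apply: Rle_trans (comp_le_norm _ _) HE.
rewrite /E /vsub lin_scale // norm_scale in HEi.
set Fp := F (vadd y0 (vscale (c + t) h)) i in HEi *.
set F0 := F (vadd y0 (vscale c h)) i in HEi *.
have Hta : 0 < Rabs t by apply: Rabs_pos_lt.
have Ex : (Fp - (c + t) * a - / 2 * (c + t) ^ 2 * b - (F0 - c * a - / 2 * c ^ 2 * b)) / t -
   (L h i - a - c * b) = (Fp - F0 - t * L h i) / t - t * b / 2.
  by field.
rewrite Ex.
apply: Rle_lt_trans (Rabs_triang _ _) _.
have Q1 : Rabs ((Fp - F0 - t * L h i) / t) < eps / 2.
  rewrite /Rdiv Rabs_mult Rabs_inv.
  apply: (Rmult_lt_reg_r (Rabs t)) => //.
  rewrite Rmult_assoc Rinv_l; last lra.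
  rewrite Rmult_1_r.
  have : eps / 2 / (norm h + 1) * (Rabs t * norm h) < eps / 2 * Rabs t.
    rewrite /Rdiv.
    have Hp : 0 < / (norm h + 1) by apply: Rinv_0_lt_compat; lra.
    have Hq : / (norm h + 1) * norm h < 1.
      apply: (Rmult_lt_reg_l (norm h + 1)); first lra.
      rewrite -Rmult_assoc Rinv_r; lra.
    have -> : eps * / 2 * / (norm h + 1) * (Rabs t * norm h) = (eps * / 2 * Rabs t) * (/ (norm h + 1) * norm h) by ring.
    apply: (Rlt_le_trans _ (eps * / 2 * Rabs t * 1)); last lra.
    apply: Rmult_lt_compat_l => //; nra.
  lra.
have Q2 : Rabs (- (t * b / 2)) < eps / 2.
  rewrite Rabs_Ropp /Rdiv !Rabs_mult (Rabs_pos_eq (/2)); last lra.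
  have Hb := Rabs_pos b.
  have : Rabs t * (Rabs b + 1) < eps.
    have := Rmult_lt_compat_r (Rabs b + 1) _ _ ltac:(lra) Ht2.
    rewrite /Rdiv Rmult_assoc Rinv_l; lra.
  nra.
lra.
Qed.

Lemma taylor n m (Ups : vec n -> vec m) D x B :
  (forall y, is_frechet_deriv Ups y (D y)) -> is_frechet_deriv2 D x B ->
  forall eps, 0 < eps -> exists del, 0 < del /\ forall h, norm h < del ->
  norm (vsub (vsub (vsub (Ups (vadd x h)) (Ups x)) (D x h)) (vscale (/2) (B h h)))
    <= eps * (norm h * norm h).
Proof.
move=> HD [HB HB2] eps Heps.
have Hm := pos_INR m.
have He1 : 0 < eps / (INR m + 1) by apply: Rdiv_lt_0_compat; lra.
have [del [Hdel Hd]] := HB2 _ He1.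
exists del; split => // h Hh.
have Hnh := norm_ge0 h.
apply: (Rle_trans _ (INR m * (eps / (INR m + 1) * (norm h * norm h)))).
  apply: norm_le_comp => i.
  set g := fun s => Ups (vadd x (vscale s h)) i - s * D x h i - / 2 * s ^ 2 * B h h i.
  set g' := fun c => D (vadd x (vscale c h)) h i - D x h i - c * B h h i.
  have [c [Hc1 Hc2]] : exists c, g 1 - g 0 = g' c * (1 - 0) /\ 0 < c < 1.
    apply: MVT_cor2; first lra.
    move=> c _; exact: deriv_line.
  have E1 : vadd x (vscale 1 h) = vadd x h.
    apply: vec_ext => j; rewrite /vadd /vscale; ring.
  have E0 : vadd x (vscale 0 h) = x.
    apply: vec_ext => j; rewrite /vadd /vscale; ring.
  have -> : vsub (vsub (vsub (Ups (vadd x h)) (Ups x)) (D x h)) (vscale (/ 2) (B h h)) i = g 1 - g 0.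
    rewrite /g E1 E0 /vsub /vscale; ring.
  rewrite Hc1 Rminus_0_r Rmult_1_r.
  have Hlin : B (vscale c h) h i = c * B h h i.
    exact: (lin_scale (L := fun u => B u h) c h i (proj2 HB h)).
  have -> : g' c = vsub (vsub (D (vadd x (vscale c h)) h) (D x h)) (B (vscale c h) h) i.
    by rewrite /g' /vsub Hlin.
  apply: Rle_trans (comp_le_norm _ _) _.
  have Hch : norm (vscale c h) <= norm h.
    rewrite norm_scale Rabs_pos_eq; nra.
  apply: Rle_trans (Hd _ _ _) _.
  - lra.
  - rewrite Rmult_assoc; apply: Rmult_le_compat_l; first lra.
    apply: Rmult_le_compat_r => //.
have Hq : INR m * (eps / (INR m + 1)) <= eps.
  have -> : INR m * (eps / (INR m + 1)) = eps - eps / (INR m + 1) by field; lra.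
  lra.
have Hp := Rmult_le_pos _ _ Hnh Hnh; nra.
Qed.

Lemma fun_choice (A B : Type) (P : A -> B -> Prop) :
  (forall a, exists b, P a b) -> exists f : A -> B, forall a, P a (f a).
Proof.
move=> H; exists (fun a => proj1_sig (constructive_indefinite_description _ (H a))).
move=> a; exact: proj2_sig (constructive_indefinite_description _ (H a)).
Qed.

Lemma extract (P : nat -> nat -> Prop) :
  (forall m, exists J, forall j, (J <= j)%nat -> P m j) ->
  exists psi : nat -> nat, (forall m, (m <= psi m)%nat) /\ forall m, P m (psi m).
Proof.
move=> H; have [J HJ] := @fun_choice _ _ _ H.
exists (fun m => maxn m (J m)); split => m; first exact: leq_maxl.
apply: HJ; exact: leq_maxr.
Qed.

Lemma small_inv eps : 0 < eps -> exists K : nat, forall k, (K <= k)%nat -> / (INR k + 1) < eps.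
Proof.
move=> He; have [N [HN HN0]] := archimed_cor1 _ He.
exists N => k Hk.
have HNk : INR N <= INR k by apply: le_INR; apply/leP.
have HN1 : 0 < INR N by apply: lt_0_INR.
apply: Rle_lt_trans HN; apply: Rinv_le_contravar => //; lra.
Qed.

Lemma inv_pos k : 0 < / (INR k + 1).
Proof. apply: Rinv_0_lt_compat; have := pos_INR k; lra. Qed.

Lemma null_pos_sub t psi : null_pos_seq t -> (forall m, (m <= psi m)%nat) ->
  null_pos_seq (fun m => t (psi m)).
Proof.
move=> [H1 H2] Hpsi; split => [k|eps He]; first exact: H1.
have [K HK] := H2 _ He; exists K => k Hk; apply: HK; exact: leq_trans Hk (Hpsi k).
Qed.

Lemma null_pos_eventually t d : null_pos_seq t -> 0 < d -> exists K, forall k, (K <= k)%nat -> t k < d.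
Proof.
move=> [H1 H2] Hd; have [K HK] := H2 _ Hd; exists K => k Hk.
have := HK _ Hk; rewrite Rabs_pos_eq; [lra | exact: Rlt_le (H1 k)].
Qed.

Lemma inv_seq_null : null_pos_seq (fun k => / (INR k + 1)).
Proof.
split => [k|eps He]; first exact: inv_pos.
have [K HK] := small_inv He; exists K => k Hk.
rewrite Rabs_pos_eq; [exact: HK | exact: Rlt_le (inv_pos k)].
Qed.

Lemma dist_le_of n (y c : vec n) (C : vec n -> Prop) r : C c -> norm (vsub y c) <= r -> dist_le y C r.
Proof. move=> Hc Hr eps He; exists c; split => //; lra. Qed.

Lemma dist_le_shift n (y y' : vec n) (C : vec n -> Prop) r a :
  dist_le y C r -> norm (vsub y' y) <= a -> dist_le y' C (r + a).
Proof.
move=> H Ha eps He; have [c [Hc Hn]] := H _ He; exists c; split => //.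
have := vsub_triang y' y c; lra.
Qed.

Lemma dist_le_mono n (y : vec n) (C : vec n -> Prop) r r' : dist_le y C r -> r <= r' -> dist_le y C r'.
Proof. move=> H Hr eps He; have [c [Hc Hn]] := H _ He; exists c; split => //; lra. Qed.

Lemma dist_le_inf n (y : vec n) (C : vec n -> Prop) r :
  (forall eta, 0 < eta -> dist_le y C (r + eta)) -> dist_le y C r.
Proof.
move=> H eps He; have [c [Hc Hn]] := H (eps / 2) ltac:(lra) (eps / 2) ltac:(lra).
exists c; split => //; lra.
Qed.

Definition sp_inv n (x : vec n) s (d y : vec n) : vec n :=
  vscale (2 / s ^ 2) (vsub (vsub y x) (vscale s d)).

Lemma so_point_inv n (x : vec n) s d y : s <> 0 -> so_point x s d (sp_inv x s d y) = y.
Proof.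
move=> Hs; apply: vec_ext => i; rewrite /so_point /sp_inv /vadd /vscale /vsub.
field; exact: Hs.
Qed.

Lemma so_point_sub n (x : vec n) s d w1 w2 :
  vsub (so_point x s d w1) (so_point x s d w2) = vscale (/ 2 * s ^ 2) (vsub w1 w2).
Proof. apply: vec_ext => i; rewrite /so_point /vadd /vscale /vsub; ring. Qed.

Lemma norm_so_point_sub n (x : vec n) s d w1 w2 :
  norm (vsub (so_point x s d w1) (so_point x s d w2)) = / 2 * s ^ 2 * norm (vsub w1 w2).
Proof.
rewrite so_point_sub norm_scale Rabs_pos_eq //.
have := pow2_ge_0 s; have : 0 < / 2 by lra. nra.
Qed.

Lemma so_point_eq n (x : vec n) s d w :
  so_point x s d w = vadd x (vadd (vscale s d) (vscale (/ 2 * s ^ 2) w)).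
Proof. apply: vec_ext => i; rewrite /so_point /vadd /vscale; ring. Qed.

Lemma dir_nbhd_ev n (d : vec n) rho del W : 0 < rho -> 0 < del -> 0 <= W ->
  exists s0, 0 < s0 /\ forall s w, 0 < s < s0 -> norm w <= W ->
    dir_nbhd d rho del (vadd (vscale s d) (vscale (/ 2 * s ^ 2) w)).
Proof.
move=> Hr Hd HW.
set nd := norm d.
have Hnd : 0 <= nd by exact: norm_ge0.
have Hb : forall s w, 0 < s < 1 -> norm w <= W ->
    norm (vadd (vscale s d) (vscale (/ 2 * s ^ 2) w)) <= s * nd + / 2 * s ^ 2 * W /\
    s * nd - / 2 * s ^ 2 * W <= norm (vadd (vscale s d) (vscale (/ 2 * s ^ 2) w)).
  move=> s w Hs Hw.
  have Hn2 : norm (vscale (/ 2 * s ^ 2) w) <= / 2 * s ^ 2 * W.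
    rewrite norm_scale Rabs_pos_eq; last nra.
    apply: Rmult_le_compat_l => //; nra.
  have Hn1 : norm (vscale s d) = s * nd by rewrite norm_scale Rabs_pos_eq //; lra.
  split.
  - apply: Rle_trans (norm_triang _ _) _; lra.
  - have := norm_rev_triang (vscale s d) (vscale (-1) (vscale (/ 2 * s ^ 2) w)).
    have -> : vsub (vscale s d) (vscale (-1) (vscale (/ 2 * s ^ 2) w)) = vadd (vscale s d) (vscale (/ 2 * s ^ 2) w).
      apply: vec_ext => i; rewrite /vsub /vadd /vscale; ring.
    rewrite norm_opp Hn1 => H.
    have := Rle_abs (s * nd - norm (vscale (/ 2 * s ^ 2) w)); lra.
case: (Req_dec nd 0) => Hnd0.
- have Hs0 : 0 < Rmin 1 (rho / (W + 1)) by apply: Rmin_pos; [lra | apply: Rdiv_lt_0_compat; lra].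
  exists (Rmin 1 (rho / (W + 1))); split => // s w Hs Hw.
  have Hs1 : s < 1 by have := Rmin_l 1 (rho / (W + 1)); lra.
  have Hs2 : s < rho / (W + 1) by have := Rmin_r 1 (rho / (W + 1)); lra.
  have Hs3 : s * (W + 1) < rho.
    have := Rmult_lt_compat_r (W + 1) _ _ ltac:(lra) Hs2.
    rewrite /Rdiv Rmult_assoc Rinv_l; lra.
  have [B1 _] := Hb s w ltac:(lra) Hw.
  split.
  + rewrite Hnd0 in B1; nra.
  + apply: Rle_trans (norm_vsub_le _ _) _.
    rewrite !norm_scale -/nd Hnd0 Rabs_R0; have := norm_ge0 (vadd (vscale s d) (vscale (/ 2 * s ^ 2) w)).
    move=> Hp; rewrite Rmult_0_r; nra.
- have Hndp : 0 < nd by lra.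
  set q := del * nd / (W * (1 + del) + 1).
  have Hq : 0 < q by apply: Rdiv_lt_0_compat; nra.
  have Hs0 : 0 < Rmin 1 (Rmin (rho / (nd + W + 1)) q).
    apply: Rmin_pos; [lra | apply: Rmin_pos => //; apply: Rdiv_lt_0_compat; lra].
  exists (Rmin 1 (Rmin (rho / (nd + W + 1)) q)); split => // s w Hs Hw.
  have Hs1 : s < 1 by have := Rmin_l 1 (Rmin (rho / (nd + W + 1)) q); lra.
  have Hs2 : s < Rmin (rho / (nd + W + 1)) q by have := Rmin_r 1 (Rmin (rho / (nd + W + 1)) q); lra.
  have Hs3 : s < rho / (nd + W + 1) by have := Rmin_l (rho / (nd + W + 1)) q; lra.
  have Hs4 : s < q by have := Rmin_r (rho / (nd + W + 1)) q; lra.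
  have Hs5 : s * (nd + W + 1) < rho.
    have := Rmult_lt_compat_r (nd + W + 1) _ _ ltac:(lra) Hs3.
    rewrite /Rdiv Rmult_assoc Rinv_l; lra.
  have Hs6 : s * (W * (1 + del) + 1) < del * nd.
    have := Rmult_lt_compat_r (W * (1 + del) + 1) _ _ ltac:(nra) Hs4.
    rewrite /q /Rdiv Rmult_assoc Rinv_l; nra.
  have [B1 B2] := Hb s w ltac:(lra) Hw.
  set om := vadd (vscale s d) (vscale (/ 2 * s ^ 2) w) in B1 B2 *.
  split.
  + nra.
  + have -> : vsub (vscale nd om) (vscale (norm om) d) =
        vadd (vscale (s * nd - norm om) d) (vscale (/ 2 * s ^ 2 * nd) w).
      apply: vec_ext => i; rewrite /om /vsub /vadd /vscale; ring.
    apply: Rle_trans (norm_triang _ _) _.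
    rewrite !norm_scale -/nd.
    have Hab : Rabs (s * nd - norm om) <= / 2 * s ^ 2 * W.
      apply: Rabs_le; split; nra.
    have Hw0 := norm_ge0 w.
    rewrite (Rabs_pos_eq (/ 2 * s ^ 2 * nd)); last nra.
    have Hsp : 0 < s by lra.
    have E1 : Rabs (s * nd - norm om) * nd <= / 2 * s ^ 2 * W * nd by nra.
    have E2 : / 2 * s ^ 2 * nd * norm w <= / 2 * s ^ 2 * nd * W by apply: Rmult_le_compat_l; nra.
    have E3 : s ^ 2 * W * nd <= del * (s * nd - / 2 * s ^ 2 * W) * nd.
      have E5 : s * W * (1 + del / 2) <= del * nd by nra.
      have E6 := Rmult_le_compat_l (s * nd) _ _ ltac:(nra) E5.
      nra.
    have E4 : del * (s * nd - / 2 * s ^ 2 * W) * nd <= del * norm om * nd.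
      apply: Rmult_le_compat_r => //; apply: Rmult_le_compat_l => //; lra.
    nra.
Qed.

Lemma bw1 (a : nat -> R) M : (forall k, Rabs (a k) <= M) ->
  exists phi : nat -> nat, (forall k, (phi k < phi k.+1)%nat) /\
    exists l, forall k, Rabs (a (phi k) - l) < / (INR k + 1).
Proof.
move=> HM.
have Hb : forall k, - M <= a k <= M.
  move=> k; have H := HM k; have H1 := Rle_abs (a k); have H2 := Rle_abs (- a k).
  rewrite Rabs_Ropp in H2; lra.
have [l Hl] := @Bolzano_Weierstrass a (fun c => - M <= c <= M) (compact_P3 (- M) M) Hb.
have Hg : forall Nk : nat * nat, exists p, (Nk.1 <= p)%nat /\ Rabs (a p - l) < / (INR Nk.2 + 1).
  move=> [N k] /=.
  have Hn : neighbourhood (disc l (mkposreal _ (inv_pos k))) l.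
    by exists (mkposreal _ (inv_pos k)) => y.
  have [p [Hp1 Hp2]] := Hl _ N Hn.
  exists p; split; [exact/leP | exact: Hp2].
have [g Hg2] := @fun_choice _ _ _ Hg.
pose fix phi k := match k with 0 => g (0, 0)%nat | S k' => g ((phi k').+1, k) end.
exists phi; split.
- move=> k /=; exact: (proj1 (Hg2 ((phi k).+1, k.+1))).
- exists l => k; case: k => [|k] /=; [exact: (proj2 (Hg2 (0, 0)%nat)) | exact: (proj2 (Hg2 ((phi k).+1, k.+1)))].
Qed.

Lemma strict_ge (phi : nat -> nat) : (forall k, (phi k < phi k.+1)%nat) -> forall j, (j <= phi j)%nat.
Proof.
move=> H; elim => [|j IH] //; apply: leq_ltn_trans IH (H j).
Qed.

Lemma bw n (u : nat -> vec n) M : (forall k, norm (u k) <= M) ->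
  exists phi : nat -> nat, (forall j, (j <= phi j)%nat) /\ exists l, vec_cv (fun j => u (phi j)) l.
Proof.
move=> HM.
have Hind : forall k, exists phi : nat -> nat, (forall j, (j <= phi j)%nat) /\ exists l : vec n,
    forall eps, 0 < eps -> exists K, forall j, (K <= j)%nat -> forall i : 'I_n, (i < k)%nat ->
      Rabs (u (phi j) i - l i) < eps.
  elim => [|k [phi [Hphi [l Hl]]]].
  - exists id; split => // ; exists (u 0%nat) => eps He; exists 0%nat => j _ i //.
  - case: (ltnP k n) => Hk; last first.
      exists phi; split => //; exists l => eps He; have [K HK] := Hl _ He.
      exists K => j Hj i Hi; apply: HK => //; apply: leq_trans (ltn_ord i) Hk.
    set ik : 'I_n := Ordinal Hk.
    have [psi [Hpsi [lk Hlk]]] := bw1 (fun j => u (phi j) ik) (fun j => Rle_trans _ _ _ (comp_le_norm _ _) (HM _)).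
    have Hpsi' := @strict_ge psi Hpsi.
    exists (fun j => phi (psi j)); split.
      move=> j; exact: leq_trans (Hpsi' j) (Hphi _).
    exists (fun i => if i == ik then lk else l i) => eps He.
    have [K1 HK1] := Hl _ He; have [K2 HK2] := small_inv He.
    exists (maxn K1 K2) => j Hj i Hi.
    case: (eqVneq i ik) => Hik.
    + apply: Rlt_trans (HK2 j (leq_trans (leq_maxr _ _) Hj)).
      rewrite Hik; exact: Hlk.
    + apply: HK1; first exact: leq_trans (leq_trans (leq_maxl _ _) Hj) (Hpsi' j).
      move: Hi; rewrite ltnS leq_eqVlt => /orP [/eqP Hv|] //.
      by exfalso; move/negP: Hik; apply; apply/eqP; apply: val_inj.
have [phi [Hphi [l Hl]]] := Hind n.
exists phi; split => //; exists l => eps He.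
have Hn := pos_INR n.
have He1 : 0 < eps / (INR n + 1) by apply: Rdiv_lt_0_compat; lra.
have [K HK] := Hl _ He1.
exists K => j Hj.
apply: (Rle_lt_trans _ (INR n * (eps / (INR n + 1)))).
- apply: norm_le_comp => i; apply: Rlt_le; rewrite /vsub; exact: HK.
- have -> : INR n * (eps / (INR n + 1)) = eps - eps / (INR n + 1) by field; lra.
  lra.
Qed.

Lemma so_expand n m (Ups : vec n -> vec m) D x B d :
  (forall y, is_frechet_deriv Ups y (D y)) -> is_frechet_deriv2 D x B ->
  forall eps, 0 < eps -> exists del, 0 < del /\ forall s w, 0 < s < del -> norm (vscale s w) < del ->
  norm (vsub (Ups (so_point x s d w)) (so_point (Ups x) s (D x d) (vadd (D x w) (B d d)))) <= eps * s ^ 2.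
Proof.
move=> HD HB2 eps Heps.
have HDl : linear_map (D x) := proj1 (HD x).
have [[HB1 HB1'] _] := HB2.
set nd := norm d; set CB := bilin_const B.
have Hnd : 0 <= nd by exact: norm_ge0.
have HCB : 0 <= CB by exact: bilin_const_ge0.
have He1 : 0 < eps / (3 * ((nd + 1) * (nd + 1))) by apply: Rdiv_lt_0_compat; nra.
have [dT [HdT HT]] := taylor HD HB2 He1.
set del := Rmin 1 (Rmin (dT / (nd + 1)) (Rmin (eps / (3 * (CB * nd + 1))) (eps / (3 * (CB + 1))))).
have Hd1 : 0 < dT / (nd + 1) by apply: Rdiv_lt_0_compat; lra.
have Hd2 : 0 < eps / (3 * (CB * nd + 1)) by apply: Rdiv_lt_0_compat; nra.
have Hd3 : 0 < eps / (3 * (CB + 1)) by apply: Rdiv_lt_0_compat; nra.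
have Hdel : 0 < del by repeat apply: Rmin_pos => //; lra.
have Hdel1 : del <= 1 by apply: Rmin_l.
have Hdel2 : del <= dT / (nd + 1).
  by apply: Rle_trans (Rmin_r _ _) _; apply: Rmin_l.
have Hdel3 : del <= eps / (3 * (CB * nd + 1)).
  by apply: Rle_trans (Rmin_r _ _) _; apply: Rle_trans (Rmin_r _ _) _; apply: Rmin_l.
have Hdel4 : del <= eps / (3 * (CB + 1)).
  by apply: Rle_trans (Rmin_r _ _) _; apply: Rle_trans (Rmin_r _ _) _; apply: Rmin_r.
exists del; split => // s w Hs Hsw.
set sw := vscale s w in Hsw *.
set h := vadd (vscale s d) (vscale (/ 2 * s ^ 2) w).
have Hnsw := norm_ge0 sw.
have Hh : norm h <= s * (nd + 1).
  apply: Rle_trans (norm_triang _ _) _.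
  rewrite !norm_scale Rabs_pos_eq; last lra.
  rewrite Rabs_pos_eq; last nra.
  have -> : / 2 * s ^ 2 * norm w = / 2 * s * (Rabs s * norm w).
    rewrite Rabs_pos_eq; [ring | lra].
  rewrite -norm_scale -/sw -/nd; nra.
have Hhd : norm h < dT.
  apply: Rle_lt_trans Hh _.
  have : s * (nd + 1) < dT / (nd + 1) * (nd + 1) by apply: Rmult_lt_compat_r; lra.
  rewrite /Rdiv Rmult_assoc Rinv_l; lra.
have HTh := HT _ Hhd.
have Eid : vsub (Ups (so_point x s d w)) (so_point (Ups x) s (D x d) (vadd (D x w) (B d d))) =
  vadd (vsub (vsub (vsub (Ups (vadd x h)) (Ups x)) (D x h)) (vscale (/ 2) (B h h)))
       (vadd (vscale (/ 4 * s ^ 2) (vadd (B d sw) (B sw d))) (vscale (/ 8 * s ^ 2) (B sw sw))).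
  rewrite so_point_eq -/h.
  apply: vec_ext => i.
  have L1 : D x h i = s * D x d i + / 2 * s ^ 2 * D x w i by rewrite /h lin_add // !lin_scale.
  have L2 : B h h i = s * B d h i + / 2 * s ^ 2 * B w h i.
    by rewrite /h (lin_add (L := fun u => B u h)) // (lin_scale (L := fun u => B u h)) // (lin_scale (L := fun u => B u h)).
  have L3 : B d h i = s * B d d i + / 2 * s ^ 2 * B d w i by rewrite /h lin_add // !lin_scale.
  have L4 : B w h i = s * B w d i + / 2 * s ^ 2 * B w w i by rewrite /h lin_add // !lin_scale.
  have L5 : B d sw i = s * B d w i by rewrite /sw lin_scale.
  have L6 : B sw d i = s * B w d i by rewrite /sw (lin_scale (L := fun u => B u d)).
  have L7 : B sw sw i = s * (s * B w w i).
    by rewrite /sw (lin_scale (L := fun u => B u (vscale s w))) // lin_scale.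
  rewrite /vsub /vadd /vscale /so_point /vadd /vscale L1 L2 L3 L4 L5 L6 L7; move: (Ups _ i) (Ups x i) (D x d i) (D x w i) (B d d i) (B d w i) (B w d i) (B w w i) => a1 a2 a3 a4 a5 a6 a7 a8; field.
rewrite Eid.
apply: Rle_trans (norm_triang _ _) _.
apply: Rle_trans (Rplus_le_compat_l _ _ _ (norm_triang _ _)) _.
rewrite !norm_scale.
have Hs2 : 0 <= s ^ 2 by nra.
rewrite (Rabs_pos_eq (/ 4 * s ^ 2)); last nra.
rewrite (Rabs_pos_eq (/ 8 * s ^ 2)); last nra.
have N1 : norm (vadd (B d sw) (B sw d)) <= 2 * CB * nd * norm sw.
  apply: Rle_trans (norm_triang _ _) _.
  have := bilin_bound d sw HB2.1; have := bilin_bound sw d HB2.1; rewrite -/CB -/nd; lra.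
have N2 : norm (B sw sw) <= CB * norm sw * norm sw by exact: bilin_bound.
have T1 : eps / (3 * ((nd + 1) * (nd + 1))) * (norm h * norm h) <= eps / 3 * s ^ 2.
  have Hh0 := norm_ge0 h.
  have Hhh : norm h * norm h <= s ^ 2 * ((nd + 1) * (nd + 1)) by nra.
  apply: Rle_trans (Rmult_le_compat_l _ _ _ (Rlt_le _ _ He1) Hhh) _.
  apply: Req_le; field; lra.
have T2 : / 4 * s ^ 2 * norm (vadd (B d sw) (B sw d)) <= eps / 3 * s ^ 2.
  have : CB * nd * norm sw <= eps / 3.
    have : (CB * nd) * norm sw <= (CB * nd + 1) * (eps / (3 * (CB * nd + 1))).
      apply: Rmult_le_compat; nra.
    have -> : (CB * nd + 1) * (eps / (3 * (CB * nd + 1))) = eps / 3 by field; nra.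
    done.
  move=> HH; nra.
have T3 : / 8 * s ^ 2 * norm (B sw sw) <= eps / 3 * s ^ 2.
  have : CB * norm sw * norm sw <= eps / 3.
    have : CB * norm sw <= (CB + 1) * (eps / (3 * (CB + 1))) by apply: Rmult_le_compat; nra.
    have -> : (CB + 1) * (eps / (3 * (CB + 1))) = eps / 3 by field; lra.
    move=> HH; nra.
  move=> HH; nra.
lra.
Qed.

Lemma subreg_use n m (Ups : vec n -> vec m) S x d : metric_subregular_dir Ups S x d ->
  exists kappa, 0 < kappa /\ forall w, exists s0, 0 < s0 /\ forall s, 0 < s < s0 -> forall r, 0 <= r ->
   dist_le (Ups (so_point x s d w)) S r -> dist_le (so_point x s d w) (preimage Ups S) (kappa * r).
Proof.
move=> [kappa [rho [del [Hk [Hr [Hd H]]]]]].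
exists kappa; split => // w.
have [s0 [Hs0 Hs]] := dir_nbhd_ev d Hr Hd (norm_ge0 w).
exists s0; split => // s Hs' r Hr0; rewrite so_point_eq; apply: H => //.
apply: Hs => //; exact: Rle_refl.
Qed.

Lemma cluster_tangent n (C : vec n -> Prop) x d w (s : nat -> R) M (z : nat -> vec n) :
  null_pos_seq s -> 0 <= M -> (forall j, C (z j)) ->
  (forall j, norm (vsub (so_point x (s j) d w) (z j)) <= (M + / (INR j + 1)) * (s j) ^ 2) ->
  dist_le w (outer_so_tangent C x d) (2 * M).
Proof.
move=> Hs HM Hz Hzj.
have Hs0 := proj1 Hs.
set e := fun j => vsub (sp_inv x (s j) d (z j)) w.
have Ez : forall j, so_point x (s j) d (vadd w (e j)) = z j.
  move=> j; have -> : vadd w (e j) = sp_inv x (s j) d (z j).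
    apply: vec_ext => i; rewrite /e /vadd /vsub; ring.
  exact: so_point_inv (Rgt_not_eq _ _ (Hs0 j)).
have Ne : forall j, norm (e j) <= 2 * (M + / (INR j + 1)).
  move=> j; have := Hzj j; rewrite norm_vsub_sym -{1}(Ez j) norm_so_point_sub.
  have -> : vsub (vadd w (e j)) w = e j by apply: vec_ext => i; rewrite /vadd /vsub; ring.
  have := Hs0 j; have := inv_pos j; have := norm_ge0 (e j) => H1 H2 H3 H4.
  have Hp : 0 < s j ^ 2 by nra.
  nra.
have Ne1 : forall j, norm (e j) <= 2 * (M + 1).
  move=> j; apply: Rle_trans (Ne j) _.
  have : / (INR j + 1) <= 1.
    rewrite -Rinv_1; apply: Rinv_le_contravar; first lra; have := pos_INR j; lra.
  lra.
have [phi [Hphi [l Hl]]] := @bw _ e _ Ne1.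
have Hnl : norm l <= 2 * M.
  apply: Rnot_lt_le => Hlt.
  set eta := (norm l - 2 * M) / 4.
  have Heta : 0 < eta by rewrite /eta; lra.
  have [K1 HK1] := Hl _ Heta.
  have [K2 HK2] := small_inv Heta.
  set j := maxn K1 K2.
  have H1 := HK1 j (leq_maxl _ _).
  have H2 := HK2 (phi j) (leq_trans (leq_maxr _ _) (Hphi j)).
  have H3 := Ne (phi j).
  have := vsub_triang l (e (phi j)) (vzero n).
  have E0 : forall v : vec n, vsub v (vzero n) = v.
    by move=> v; apply: vec_ext => i; rewrite /vsub /vzero; ring.
  rewrite !E0 norm_vsub_sym => H4.
  rewrite /eta in H1 H2; lra.
have Hmem : outer_so_tangent C x d (vadd w l).
  exists (fun j => s (phi j)); split; first exact: null_pos_sub.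
  move=> eps He.
  have [K HK] := Hl _ He.
  exists K => j Hj; apply: (dist_le_of _ _ _ (Hz (phi j))).
  rewrite -(Ez (phi j)) norm_so_point_sub.
  have -> : vsub (vadd w l) (vadd w (e (phi j))) = vscale (-1) (vsub (e (phi j)) l).
    by apply: vec_ext => i; rewrite /vadd /vsub /vscale; ring.
  rewrite norm_opp.
  have H1 := HK _ Hj; have Hp := Hs0 (phi j).
  have H2 : 0 < s (phi j) ^ 2 by nra.
  have := norm_ge0 (vsub (e (phi j)) l) => H3.
  nra.
apply: (dist_le_of _ _ _ Hmem).
have -> : vsub w (vadd w l) = vscale (-1) l by apply: vec_ext => i; rewrite /vadd /vsub /vscale; ring.
by rewrite norm_opp.
Qed.

Definition SRprop n m (Ups : vec n -> vec m) S x d kappa :=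
  forall w, exists s0, 0 < s0 /\ forall s, 0 < s < s0 -> forall r, 0 <= r ->
   dist_le (Ups (so_point x s d w)) S r -> dist_le (so_point x s d w) (preimage Ups S) (kappa * r).

Lemma dist_transfer n m (Ups : vec n -> vec m) D S x d B kappa :
  (forall y, is_frechet_deriv Ups y (D y)) -> is_frechet_deriv2 D x B ->
  0 < kappa -> SRprop Ups S x d kappa ->
  forall w r, 0 <= r ->
  dist_le (vadd (D x w) (B d d)) (outer_so_tangent S (Ups x) (D x d)) r ->
  dist_le w (outer_so_tangent (preimage Ups S) x d) (kappa * r).
Proof.
move=> HD HB Hk HSR w r Hr Hdist.
apply: dist_le_inf => eta Heta.
set u := vadd (D x w) (B d d).
have Heta1 : 0 < eta / kappa by apply: Rdiv_lt_0_compat.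
have [v [Hv Huv]] := Hdist _ Heta1.
rewrite -/u in Huv.
have [s [Hs Hvs]] := Hv.
have [s0 [Hs0 Hsr]] := HSR w.
set em := fun k : nat => / (INR k + 1) / (2 * kappa + 1).
have Hem : forall m, 0 < em m.
  move=> k; apply: Rdiv_lt_0_compat; [exact: inv_pos | lra].
have Hext : forall mm, exists J, forall j, (J <= j)%nat ->
   s j < s0 /\ dist_le (so_point (Ups x) (s j) (D x d) v) S (em mm * s j ^ 2) /\
   norm (vsub (Ups (so_point x (s j) d w)) (so_point (Ups x) (s j) (D x d) u)) <= em mm * s j ^ 2.
  move=> mm.
  have [K1 HK1] := Hvs _ (Hem mm).
  have [dl [Hdl Hexp]] := so_expand d HD HB (Hem mm).
  have Hq : 0 < Rmin s0 (dl / (norm w + 1)).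
    apply: Rmin_pos => //; apply: Rdiv_lt_0_compat => //; have := norm_ge0 w; lra.
  have [K2 HK2] := null_pos_eventually Hs Hq.
  exists (maxn K1 K2) => j Hj.
  have Hj1 : (K1 <= j)%nat by exact: leq_trans (leq_maxl _ _) Hj.
  have Hj2 : (K2 <= j)%nat by exact: leq_trans (leq_maxr _ _) Hj.
  have Hsj := HK2 _ Hj2.
  have Hsj1 : s j < s0 by have := Rmin_l s0 (dl / (norm w + 1)); lra.
  have Hsj2 : s j < dl / (norm w + 1) by have := Rmin_r s0 (dl / (norm w + 1)); lra.
  have Hspos := proj1 Hs j.
  have Hnw := norm_ge0 w.
  have Hsw : s j * (norm w + 1) < dl.
    have := Rmult_lt_compat_r (norm w + 1) _ _ ltac:(lra) Hsj2.
    rewrite /Rdiv Rmult_assoc Rinv_l; lra.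
  split => //; split; first exact: HK1.
  apply: Hexp.
  - split => //; nra.
  - rewrite norm_scale Rabs_pos_eq; nra.
have [psi [Hpsi HP]] := extract _ Hext.
set s' := fun mm => s (psi mm).
have Hz : forall mm, exists z, preimage Ups S z /\
    norm (vsub (so_point x (s' mm) d w) z) <= (kappa * (r + eta / kappa) / 2 + / (INR mm + 1)) * s' mm ^ 2.
  move=> mm.
  have [P1 [P2 P3]] := HP mm.
  have Hsp := proj1 Hs (psi mm).
  have Hs2 : 0 < s' mm ^ 2 by rewrite /s'; nra.
  have Q1 : norm (vsub (so_point (Ups x) (s' mm) (D x d) u) (so_point (Ups x) (s' mm) (D x d) v))
      <= / 2 * s' mm ^ 2 * (r + eta / kappa).
    rewrite norm_so_point_sub; apply: Rmult_le_compat_l; [nra | lra].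
  have Q2 : dist_le (Ups (so_point x (s' mm) d w)) S
      (em mm * s' mm ^ 2 + (em mm * s' mm ^ 2 + / 2 * s' mm ^ 2 * (r + eta / kappa))).
    apply: (dist_le_shift _ P2).
    apply: Rle_trans (vsub_triang _ (so_point (Ups x) (s' mm) (D x d) u) _) _.
    rewrite /s' in Q1 *; lra.
  have Hr' : 0 <= em mm * s' mm ^ 2 + (em mm * s' mm ^ 2 + / 2 * s' mm ^ 2 * (r + eta / kappa)).
    have := Hem mm; nra.
  have Q3 := Hsr (s' mm) (conj Hsp P1) _ Hr' Q2.
  have [z [Hz1 Hz2]] := Q3 _ (Rmult_lt_0_compat _ _ (Hem mm) Hs2).
  exists z; split => //.
  apply: Rlt_le; apply: Rlt_le_trans Hz2 _.
  have -> : kappa * (em mm * s' mm ^ 2 + (em mm * s' mm ^ 2 + / 2 * s' mm ^ 2 * (r + eta / kappa))) +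
     em mm * s' mm ^ 2 = (kappa * (r + eta / kappa) / 2 + (2 * kappa + 1) * em mm) * s' mm ^ 2 by field; lra.
  have -> : (2 * kappa + 1) * em mm = / (INR mm + 1) by rewrite /em; have Hp := pos_INR mm; field; (try split); lra.
  lra.
have [z Hzz] := @fun_choice _ _ _ Hz.
have Hns : null_pos_seq s' by exact: null_pos_sub.
have HM : 0 <= kappa * (r + eta / kappa) / 2 by nra.
have := @cluster_tangent n (preimage Ups S) x d w s' (kappa * (r + eta / kappa) / 2) z Hns HM (fun j => proj1 (Hzz j)) (fun j => proj2 (Hzz j)).
have -> : 2 * (kappa * (r + eta / kappa) / 2) = kappa * r + eta by field; lra.
done.
Qed.

Lemma vsub_zero n (v : vec n) : vsub v (vzero n) = v.
Proof. apply: vec_ext => i; rewrite /vsub /vzero; ring. Qed.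

Lemma ev_small n (t : nat -> R) (w : nat -> vec n) : null_pos_seq t ->
  vec_cv (fun k => vscale (t k) (w k)) (vzero n) ->
  forall del, 0 < del -> exists K, forall k, (K <= k)%nat -> t k < del /\ norm (vscale (t k) (w k)) < del.
Proof.
move=> Ht Hw del Hd.
have [K1 HK1] := null_pos_eventually Ht Hd.
have [K2 HK2] := Hw _ Hd.
exists (maxn K1 K2) => k Hk; split.
- apply: HK1; exact: leq_trans (leq_maxl _ _) Hk.
- rewrite -(vsub_zero (vscale _ _)); apply: HK2; exact: leq_trans (leq_maxr _ _) Hk.
Qed.

Lemma main_outer n m (Ups : vec n -> vec m) D S x d B kappa :
  (forall y, is_frechet_deriv Ups y (D y)) -> is_frechet_deriv2 D x B ->
  0 < kappa -> SRprop Ups S x d kappa ->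
  outer_so_regular S (Ups x) (D x d) ->
  forall (t : nat -> R) (w : nat -> vec n),
    null_pos_seq t ->
    (forall k, preimage Ups S (so_point x (t k) d (w k))) ->
    vec_cv (fun k => vscale (t k) (w k)) (vzero n) ->
    forall eps, 0 < eps -> exists K, forall k, (K <= k)%nat ->
      dist_le (w k) (outer_so_tangent (preimage Ups S) x d) eps.
Proof.
move=> HD HB Hk HSR [_ HSreg] t w Ht Hmem Htw eps Heps.
have HDl : linear_map (D x) := proj1 (HD x).
have Htp := proj1 Ht.
set v := fun k => sp_inv (Ups x) (t k) (D x d) (Ups (so_point x (t k) d (w k))).
set u := fun k => vadd (D x (w k)) (B d d).
have Ev : forall k, so_point (Ups x) (t k) (D x d) (v k) = Ups (so_point x (t k) d (w k)).
  move=> k; apply: so_point_inv; exact: Rgt_not_eq (Htp k).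
have Hvu : forall e, 0 < e -> exists K, forall k, (K <= k)%nat -> norm (vsub (v k) (u k)) <= 2 * e.
  move=> e He.
  have [dl [Hdl Hexp]] := so_expand d HD HB He.
  have [K HK] := @ev_small _ t w Ht Htw _ Hdl.
  exists K => k Hkk.
  have [H1 H2] := HK _ Hkk.
  have := Hexp (t k) (w k) (conj (Htp k) H1) H2.
  rewrite -Ev norm_so_point_sub -/(u k) => H3.
  have Ht2 : 0 < t k ^ 2 by have := Htp k; nra.
  have H4 := norm_ge0 (vsub (v k) (u k)).
  nra.
have Hcv : vec_cv (fun k => vscale (t k) (v k)) (vzero m).
  move=> e He.
  set CD := lin_const (D x).
  have HCD : 0 <= CD := lin_const_ge0 _.
  have HBd := norm_ge0 (B d d).
  set eta := e / (3 + CD + norm (B d d)).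
  have Heta : 0 < eta by apply: Rdiv_lt_0_compat; lra.
  have [K1 HK1] := Hvu 1 Rlt_0_1.
  have [K2 HK2] := @ev_small _ t w Ht Htw _ Heta.
  exists (maxn K1 K2) => k Hkk.
  have Hv1 := HK1 _ (leq_trans (leq_maxl _ _) Hkk).
  have [H1 H2] := HK2 _ (leq_trans (leq_maxr _ _) Hkk).
  rewrite vsub_zero.
  have -> : vscale (t k) (v k) = vadd (vscale (t k) (vsub (v k) (u k)))
                                 (vadd (D x (vscale (t k) (w k))) (vscale (t k) (B d d))).
    apply: vec_ext => i; rewrite /vadd /vscale /vsub /u lin_scale // /vadd; ring.
  apply: Rle_lt_trans (norm_triang _ _) _.
  apply: Rle_lt_trans (Rplus_le_compat_l _ _ _ (norm_triang _ _)) _.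
  rewrite !norm_scale !Rabs_pos_eq; try exact: Rlt_le (Htp k).
  have H3 := lin_bound (vscale (t k) (w k)) HDl; rewrite -/CD in H3.
  have H4 : t k * norm (vsub (v k) (u k)) <= 2 * eta by have := Htp k; nra.
  have H5 : CD * norm (vscale (t k) (w k)) <= CD * eta by apply: Rmult_le_compat_l; lra.
  have H6 : t k * norm (B d d) <= eta * norm (B d d) by apply: Rmult_le_compat_r; lra.
  have -> : e = eta * (3 + CD + norm (B d d)) by rewrite /eta; field; lra.
  nra.
have Hr : 0 < eps / (2 * kappa) by apply: Rdiv_lt_0_compat; lra.
have [K1 HK1] := HSreg t v Ht (fun k => ltac:(rewrite Ev; exact: Hmem k)) Hcv _ Hr.
have Hr2 : 0 < eps / (4 * kappa) by apply: Rdiv_lt_0_compat; lra.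
have [K2 HK2] := Hvu _ Hr2.
exists (maxn K1 K2) => k Hkk.
have D1 := HK1 _ (leq_trans (leq_maxl _ _) Hkk).
have D2 := HK2 _ (leq_trans (leq_maxr _ _) Hkk).
rewrite norm_vsub_sym in D2.
have D3 := dist_le_shift _ D1 D2.
have Hr0 : 0 <= eps / (2 * kappa) + 2 * (eps / (4 * kappa)) by lra.
have := dist_transfer HD HB Hk HSR (w k) Hr0 D3.
have -> : kappa * (eps / (2 * kappa) + 2 * (eps / (4 * kappa))) = eps by field; lra.
done.
Qed.

Lemma tangent_pre n m (Ups : vec n -> vec m) D S x d B kappa :
  (forall y, is_frechet_deriv Ups y (D y)) -> is_frechet_deriv2 D x B ->
  0 < kappa -> SRprop Ups S x d kappa ->
  tangent_cone S (Ups x) (D x d) -> tangent_cone (preimage Ups S) x d.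
Proof.
move=> HD HB Hk HSR [t [u [Ht [Hu HS]]]].
have Htp := proj1 Ht.
have [s0 [Hs0 Hsr]] := HSR (vzero n).
have [d1 [Hd1 Hexp]] := so_expand d HD HB Rlt_0_1.
set u0 := vadd (D x (vzero n)) (B d d).
have Hu0 := norm_ge0 u0.
set em := fun k : nat => / (INR k + 1) / (2 * (kappa + 1)).
have Hem : forall k, 0 < em k.
  move=> k; apply: Rdiv_lt_0_compat; [exact: inv_pos | lra].
have E0 : forall s, so_point x s d (vzero n) = vadd x (vscale s d).
  by move=> s; apply: vec_ext => i; rewrite /so_point /vadd /vscale /vzero; ring.
have Hext : forall mm, exists J, forall j, (J <= j)%nat ->
    t j < s0 /\ t j < d1 /\ t j * (1 + norm u0) <= em mm /\ norm (vsub (u j) (D x d)) <= em mm.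
  move=> mm.
  have Hq : 0 < Rmin s0 (Rmin d1 (em mm / (1 + norm u0))).
    apply: Rmin_pos => //; apply: Rmin_pos => //; apply: Rdiv_lt_0_compat; [exact: Hem | lra].
  have [K1 HK1] := null_pos_eventually Ht Hq.
  have [K2 HK2] := Hu _ (Hem mm).
  exists (maxn K1 K2) => j Hj.
  have H1 := HK1 _ (leq_trans (leq_maxl _ _) Hj).
  have H2 := HK2 _ (leq_trans (leq_maxr _ _) Hj).
  have Ha := Rmin_l s0 (Rmin d1 (em mm / (1 + norm u0))).
  have Hb := Rmin_r s0 (Rmin d1 (em mm / (1 + norm u0))).
  have Hc := Rmin_l d1 (em mm / (1 + norm u0)).
  have Hd := Rmin_r d1 (em mm / (1 + norm u0)).
  split; first lra. split; first lra. split; last lra.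
  have : t j < em mm / (1 + norm u0) by lra.
  move=> Hx; have := Rmult_lt_compat_r (1 + norm u0) _ _ ltac:(lra) Hx.
  rewrite /Rdiv Rmult_assoc Rinv_l; lra.
have [psi [Hpsi HP]] := extract _ Hext.
set t' := fun mm => t (psi mm).
have Hz : forall mm, exists z, preimage Ups S z /\
    norm (vsub (vadd x (vscale (t' mm) d)) z) <= (2 * kappa + 1) * em mm * t' mm.
  move=> mm.
  have [P1 [P2 [P3 P4]]] := HP mm.
  have Htq := Htp (psi mm).
  have Q1 := Hexp (t' mm) (vzero n) (conj Htq P2) ltac:(rewrite norm_scale norm_zero Rmult_0_r; lra).
  rewrite -/u0 in Q1.
  have Q2 : norm (vsub (so_point (Ups x) (t' mm) (D x d) u0) (vadd (Ups x) (vscale (t' mm) (u (psi mm)))))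
      <= t' mm * em mm + / 2 * t' mm ^ 2 * norm u0.
    have -> : vsub (so_point (Ups x) (t' mm) (D x d) u0) (vadd (Ups x) (vscale (t' mm) (u (psi mm)))) =
      vadd (vscale (t' mm) (vscale (-1) (vsub (u (psi mm)) (D x d)))) (vscale (/ 2 * t' mm ^ 2) u0).
      by apply: vec_ext => i; rewrite /so_point /vsub /vadd /vscale; ring.
    apply: Rle_trans (norm_triang _ _) _.
    rewrite !norm_scale Rabs_Ropp Rabs_R1 Rmult_1_l !Rabs_pos_eq /t'; try nra.
  have Q3 : dist_le (Ups (so_point x (t' mm) d (vzero n))) S (t' mm * (2 * em mm)).
    apply: dist_le_mono.
      apply: (dist_le_of _ _ _ (HS (psi mm))).
      exact: Rle_trans (vsub_triang _ (so_point (Ups x) (t' mm) (D x d) u0) _) (Rplus_le_compat _ _ _ _ Q1 Q2).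
    rewrite /t'; nra.
  have Hr' : 0 <= t' mm * (2 * em mm) by have := Hem mm; rewrite /t'; nra.
  have Q4 := Hsr (t' mm) (conj Htq P1) _ Hr' Q3.
  have Hpos : 0 < em mm * t' mm by have := Hem mm; rewrite /t'; nra.
  have [z [Hz1 Hz2]] := Q4 _ Hpos.
  exists z; split => //; rewrite -E0; lra.
have [z Hzz] := @fun_choice _ _ _ Hz.
exists t', (fun mm => vscale (/ t' mm) (vsub (z mm) x)); split; first exact: null_pos_sub.
split.
- move=> e He; have [K HK] := small_inv He.
  exists K => mm Hmm.
  have Htq := Htp (psi mm).
  have -> : vsub (vscale (/ t' mm) (vsub (z mm) x)) d = vscale (/ t' mm) (vscale (-1) (vsub (vadd x (vscale (t' mm) d)) (z mm))).
    apply: vec_ext => i; rewrite /vsub /vscale /vadd /t'; field; lra.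
  rewrite norm_scale norm_opp Rabs_pos_eq; last by apply: Rlt_le; apply: Rinv_0_lt_compat.
  have H1 := proj2 (Hzz mm).
  have H2 := HK _ Hmm.
  have H3 : (2 * kappa + 1) * em mm < / (INR mm + 1).
    rewrite /em; have Hp := inv_pos mm.
    have -> : (2 * kappa + 1) * (/ (INR mm + 1) / (2 * (kappa + 1))) = / (INR mm + 1) * ((2 * kappa + 1) / (2 * (kappa + 1))) by have Hpi := pos_INR mm; field; (try split); lra.
    have : (2 * kappa + 1) / (2 * (kappa + 1)) < 1.
      apply: (Rmult_lt_reg_r (2 * (kappa + 1))); first lra.
      rewrite /Rdiv Rmult_assoc Rinv_l; lra.
    nra.
  apply: (Rle_lt_trans _ ((2 * kappa + 1) * em mm)); last lra.
  have Hinv : / t' mm * t' mm = 1 by apply: Rinv_l; rewrite /t'; lra.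
  have Hi : 0 < / t' mm by apply: Rinv_0_lt_compat.
  have := Rmult_le_compat_l _ _ _ (Rlt_le _ _ Hi) H1.
  have -> : / t' mm * ((2 * kappa + 1) * em mm * t' mm) = (2 * kappa + 1) * em mm * (/ t' mm * t' mm) by ring.
  rewrite Hinv; lra.
- move=> mm.
  have -> : vadd x (vscale (t' mm) (vscale (/ t' mm) (vsub (z mm) x))) = z mm.
    apply: vec_ext => i; rewrite /vadd /vscale /vsub /t'; field; have := Htp (psi mm); lra.
  exact: proj1 (Hzz mm).
Qed.

Lemma in_out n (C : vec n -> Prop) x d w : inner_so_tangent C x d w -> outer_so_tangent C x d w.
Proof.
move=> Hin; exists (fun k => / (INR k + 1)); split; first exact: inv_seq_null.
move=> eps He; have [del [Hdel Hd]] := Hin _ He.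
have [K HK] := small_inv Hdel.
exists K => k Hk; apply: Hd; split; [exact: inv_pos | exact: HK].
Qed.

Lemma out_pre n m (Ups : vec n -> vec m) D S x d B w :
  (forall y, is_frechet_deriv Ups y (D y)) -> is_frechet_deriv2 D x B ->
  outer_so_tangent (preimage Ups S) x d w ->
  outer_so_tangent S (Ups x) (D x d) (vadd (D x w) (B d d)).
Proof.
move=> HD HB [t [Ht Hw]]; exists t; split => // eps He.
have HDl : linear_map (D x) := proj1 (HD x).
have Htp := proj1 Ht.
set CD := lin_const (D x).
have HCD : 0 <= CD := lin_const_ge0 _.
set e0 := Rmin 1 (eps / (2 * CD + 1)).
have He0 : 0 < e0 by apply: Rmin_pos; [lra | apply: Rdiv_lt_0_compat; lra].
have He01 : e0 <= 1 by apply: Rmin_l.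
have He02 : e0 * (2 * CD + 1) <= eps.
  have := Rmin_r 1 (eps / (2 * CD + 1)); rewrite -/e0 => H.
  have := Rmult_le_compat_r (2 * CD + 1) _ _ ltac:(lra) H.
  rewrite /Rdiv Rmult_assoc Rinv_l; lra.
have [dl [Hdl Hexp]] := so_expand d HD HB He0.
have [K1 HK1] := Hw _ He0.
have Hnw := norm_ge0 w.
have Hq : 0 < dl / (norm w + 5) by apply: Rdiv_lt_0_compat; lra.
have [K2 HK2] := null_pos_eventually Ht Hq.
exists (maxn K1 K2) => k Hk.
have D1 := HK1 _ (leq_trans (leq_maxl _ _) Hk).
have T1 := HK2 _ (leq_trans (leq_maxr _ _) Hk).
have Htk := Htp k.
have Ht2 : 0 < t k ^ 2 by nra.
have T2 : t k * (norm w + 5) < dl.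
  have := Rmult_lt_compat_r (norm w + 5) _ _ ltac:(lra) T1.
  rewrite /Rdiv Rmult_assoc Rinv_l; lra.
have [z [Hz1 Hz2]] := D1 _ (Rmult_lt_0_compat _ _ He0 Ht2).
set w' := sp_inv x (t k) d z.
have Ez : so_point x (t k) d w' = z by apply: so_point_inv; lra.
have Hww : norm (vsub w' w) < 4 * e0.
  move: Hz2; rewrite -Ez norm_vsub_sym norm_so_point_sub => H.
  nra.
have Hw' : norm (vscale (t k) w') < dl.
  rewrite norm_scale Rabs_pos_eq; last lra.
  have := vsub_triang w' w (vzero n); rewrite !vsub_zero => H.
  have Hn : norm w' <= norm w + 4 by lra.
  have H5 := Rmult_le_compat_l (t k) _ _ (Rlt_le _ _ Htk) Hn.
  nra.
have Htd : t k < dl.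
  have : t k * 1 <= t k * (norm w + 5) by apply: Rmult_le_compat_l; lra.
  lra.
have Q1 := Hexp (t k) w' (conj Htk Htd) Hw'.
rewrite Ez in Q1.
apply: (dist_le_of _ (Ups z) S Hz1).
apply: Rle_trans (vsub_triang _ (so_point (Ups x) (t k) (D x d) (vadd (D x w') (B d d))) _) _.
rewrite norm_so_point_sub (norm_vsub_sym _ (Ups z)).
have -> : vsub (vadd (D x w) (B d d)) (vadd (D x w') (B d d)) = D x (vsub w w').
  apply: vec_ext => i; rewrite lin_sub // /vsub /vadd; ring.
have Q2 := lin_bound (vsub w w') HDl; rewrite -/CD norm_vsub_sym in Q2.
have Q3 : CD * norm (vsub w' w) <= CD * (4 * e0) by apply: Rmult_le_compat_l; lra.
nra.
Qed.

Lemma in_pre n m (Ups : vec n -> vec m) D S x d B kappa w :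
  (forall y, is_frechet_deriv Ups y (D y)) -> is_frechet_deriv2 D x B ->
  0 < kappa -> SRprop Ups S x d kappa ->
  inner_so_tangent S (Ups x) (D x d) (vadd (D x w) (B d d)) ->
  inner_so_tangent (preimage Ups S) x d w.
Proof.
move=> HD HB Hk HSR Hin eps He.
have He1 : 0 < eps / (2 * kappa) by apply: Rdiv_lt_0_compat; lra.
have [d1 [Hd1 Hin1]] := Hin _ He1.
have [d2 [Hd2 Hexp]] := so_expand d HD HB He1.
have [s0 [Hs0 Hsr]] := HSR w.
have Hnw := norm_ge0 w.
have Hq : 0 < d2 / (norm w + 1) by apply: Rdiv_lt_0_compat; lra.
exists (Rmin d1 (Rmin s0 (d2 / (norm w + 1)))); split.
  by apply: Rmin_pos => //; apply: Rmin_pos.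
move=> s [Hs Hs'].
have Ha := Rmin_l d1 (Rmin s0 (d2 / (norm w + 1))).
have Hb := Rmin_r d1 (Rmin s0 (d2 / (norm w + 1))).
have Hc := Rmin_l s0 (d2 / (norm w + 1)).
have Hd := Rmin_r s0 (d2 / (norm w + 1)).
have Hs3 : s * (norm w + 1) < d2.
  have : s < d2 / (norm w + 1) by lra.
  move=> Hx; have := Rmult_lt_compat_r (norm w + 1) _ _ ltac:(lra) Hx.
  rewrite /Rdiv Rmult_assoc Rinv_l; lra.
have Hsd1 : s < d1.
  exact: Rlt_le_trans Hs' Ha.
have Q1 := Hin1 s (conj Hs Hsd1).
have Hsd2 : s < d2.
  have : s * 1 <= s * (norm w + 1) by apply: Rmult_le_compat_l; lra.
  lra.
have Hsd3 : norm (vscale s w) < d2.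
  rewrite norm_scale Rabs_pos_eq; last lra.
  have : s * norm w <= s * (norm w + 1) by apply: Rmult_le_compat_l; lra.
  lra.
have Q2 := Hexp s w (conj Hs Hsd2) Hsd3.
have Q3 := dist_le_shift _ Q1 Q2.
have Hr : 0 <= eps / (2 * kappa) * s ^ 2 + eps / (2 * kappa) * s ^ 2 by nra.
have Hss0 : s < s0 by lra.
have Q4 := Hsr s (conj Hs Hss0) _ Hr Q3.
apply: (dist_le_mono Q4).
apply: Req_le; field; lra.
Qed.

Unset Implicit Arguments.

Theorem proposition2p1 (n m : nat) (Ups : vec n -> vec m) (D : vec n -> vec n -> vec m)
    (S : vec m -> Prop) (xbar d : vec n) :
  closed_vset S ->
  twice_differentiable_with Ups D ->
  S (Ups xbar) ->
  metric_subregular_dir Ups S xbar d ->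
  tangent_cone S (Ups xbar) (D xbar d) ->
  (outer_so_regular S (Ups xbar) (D xbar d) -> outer_so_regular (preimage Ups S) xbar d) /\
  (so_regular S (Ups xbar) (D xbar d) -> so_regular (preimage Ups S) xbar d).
Proof.
move=> _ Htd _ Hsub Htan.
have HD : forall y, is_frechet_deriv Ups y (D y) := fun y => proj1 (Htd y).
have [B HBx] := proj2 (Htd xbar).
have [kappa [Hk HSR]] := subreg_use Hsub.
have Hout : outer_so_regular S (Ups xbar) (D xbar d) -> outer_so_regular (preimage Ups S) xbar d.
  move=> Ho; split; first exact: tangent_pre HD HBx Hk HSR Htan.
  exact: main_outer HD HBx Hk HSR Ho.
split => //.
move=> [Ho Hiff]; split; first exact: Hout.
move=> w; split; last exact: in_out.
move=> Hw; apply (@in_pre _ _ Ups D S xbar d B kappa w HD HBx Hk HSR); apply/Hiff; exact: (@out_pre _ _ Ups D S xbar d B w HD HBx Hw).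
Qed.
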